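(* Let $T=(V,E,r)$ be a finite rooted tree embedded in $\mathbb R^n$ as described in the context, and let $i,j,k$ be three adjacent nodes with $i<j<k$ (i.e. $i$ is the parent of $j$ and $j$ is the parent of $k$). Assume that Assumption A1 holds: for all $x,x'\in[x_i,x_j]$ and $y,y'\in[x_j,x_k]$, $\ell([x,y])\le\ell([x',y'])\Rightarrow\|x-y\|\le\|x'-y'\|$. Then $$\langle\mu_{[x_i,x_j]},\mu_{[x_j,x_k]}\rangle_{W^\ast}=o\Big(\|\mu_{[x_i,x_j]}\|^2_{W^\ast}+\|\mu_{[x_j,x_k]}\|^2_{W^\ast}\Big)$$ as $\sigma_x,\sigma_t\to0$ with $\sigma_x\asymp\sigma_t$, where $\sigma_x\asymp\sigma_t$ means there exist constants $k_1,k_2>0$ with $k_1\sigma_x\le\sigma_t\le k_2\sigma_x$.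
   Context: Rooted tree and embedding. $T=(V,E,r)$ is a finite rooted tree with root $r$; $i<j$ means $i$ is the parent of $j$. The tree is embedded in $\mathbb R^n$ via an injective map $i\mapsto x_i\in\mathbb R^n$ and a map sending each edge $(i,j)$ to a smooth curve segment $[x_i,x_j]$ joining $x_i$ and $x_j$ (not necessarily a line segment); embeddings of two edges intersect only if the edges share a node, and only at the image of that node. The embedding of the path from $r$ to any node is a smooth, regular curve of finite length, oriented from the root to the end node; $[x,y]$ denotes the sub-arc between two points on a common embedded root-to-node path. $\ell(\gamma)$ is arc length, $\vec t(x)\in\mathbb S^{n-1}$ the unit oriented tangent vector at $x$. For $\sigma_x,\sigma_t>0$ and smooth oriented curves $X,Y$ of finite length, $$\langle\mu_X,\mu_Y\rangle_{W^\ast}=\iint_{X\times Y} e^{-\|x-y\|^2/\sigma_x^2}\,e^{-\|\vec t(x)-\vec t(y)\|^2/\sigma_t^2}\,d\ell(x)\,d\ell(y),\qquad \|\mu_X\|^2_{W^\ast}=\langle\mu_X,\mu_X\rangle_{W^\ast}$$ (the oriented-varifold inner product induced by the Gaussian tensor-product kernel with parameters $\sigma_x,\sigma_t$). *)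

(* Defs.v *)
From HB Require Import structures.
From mathcomp Require Import all_boot all_order all_algebra.
From mathcomp Require Import all_classical all_reals all_analysis.
Set Implicit Arguments. Unset Strict Implicit. Unset Printing Implicit Defensive.
Import Order.TTheory GRing.Theory Num.Theory.
Import numFieldNormedType.Exports.
Local Open Scope classical_set_scope.
Local Open Scope ring_scope.

Section Defs.
Variables (R : realType) (n : nat).

Definition enorm (v : 'rV[R]_n) : R := Num.sqrt (\sum_(i < n) v ord0 i ^+ 2).

Definition smooth_curve (g : R -> 'rV[R]_n) : Prop :=
  forall (k : nat) (t : R), derivable (iter k (@derive1 R _) g) t 1.

Definition arclen (g : R -> 'rV[R]_n) (s t : R) : R :=
  Rintegral (@lebesgue_measure R) `[s, t] (fun u => enorm (derive1 g u)).

Definition utangent (g : R -> 'rV[R]_n) (s : R) : 'rV[R]_n :=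
  (enorm (derive1 g s))^-1 *: derive1 g s.

Definition vkernel (sx st : R) (x y u v : 'rV[R]_n) : R :=
  expR (- (enorm (x - y) ^+ 2 / sx ^+ 2)) * expR (- (enorm (u - v) ^+ 2 / st ^+ 2)).

(* Oriented-varifold inner product <mu_X, mu_Y>_{W*} of X = g([a,b]) and
   Y = g([c,d]), integrating against arc length d l = |g'(s)| ds. *)
Definition varifold_ip (sx st : R) (g : R -> 'rV[R]_n) (a b c d : R) : R :=
  Rintegral (@lebesgue_measure R) `[a, b] (fun s =>
    Rintegral (@lebesgue_measure R) `[c, d] (fun t =>
      vkernel sx st (g s) (g t) (utangent g s) (utangent g t)
      * enorm (derive1 g s) * enorm (derive1 g t))).

End Defs.

(* Main.v *)
Require Import Defs.
From HB Require Import structures.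
From mathcomp Require Import all_boot all_order all_algebra.
From mathcomp Require Import all_classical all_reals all_analysis.
From mathcomp Require Import ring lra measurable_realfun.
Import Order.TTheory GRing.Theory Num.Theory.
Import numFieldNormedType.Exports.
Local Open Scope ring_scope.

Module Helpers.
Local Open Scope classical_set_scope.
Set Implicit Arguments. Unset Strict Implicit. Unset Printing Implicit Defensive.

Section Int.
Context {R : realType}.
Local Notation mu := (@lebesgue_measure R).

Lemma le_int_nm (D : set R) (f h : R -> R) :
  (forall x, D x -> 0 <= f x <= h x) ->
  (\int[mu]_(x in D) (f x)%:E <= \int[mu]_(x in D) (h x)%:E)%E.
Proof.
move=> fh.
rewrite !ge0_integralE; last 2 first.
- by move=> x /fh /andP[f0 fh']; rewrite lee_fin (le_trans f0).
- by move=> x /fh /andP[f0 _]; rewrite lee_fin.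
apply: ereal_sup_le => _ [k kf <-]; exists k => //= x.
rewrite (le_trans (kf x))// /patch; case: ifP => // /set_mem /fh /andP[_].
by rewrite lee_fin.
Qed.

Lemma mu_itv (u v : R) : u <= v -> mu `[u, v] = (v - u)%:E.
Proof.
rewrite le_eqVlt => /predU1P[->|uv]; rewrite lebesgue_measure_itv/= lte_fin.
  by rewrite ltxx subrr.
by rewrite uv -EFinD.
Qed.

Lemma mu_itv' (u v : R) : u <= v ->
  (lebesgue_measure_lebesgue_measure__canonical__measure_function_Measure R) `[u, v] = (v - u)%:E.
Proof. exact: mu_itv. Qed.

Lemma int_step (p q u v al be : R) : p <= q -> u <= v -> 0 <= al -> 0 <= be ->
  (\int[mu]_(x in `[p, q]) (al + be * \1_(`[u, v]) x)%:E <=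
     (al * (q - p) + be * (v - u))%:E)%E.
Proof.
move=> pq uv al0 be0.
under eq_integral do rewrite EFinD.
rewrite ge0_integralD//; try (by move=> x _; rewrite lee_fin ?mulr_ge0);
  try (by apply/measurable_realfun.measurable_EFinP; apply: measurable_funM;
    [exact: measurable_cst|exact: measurable_realfun.measurable_indic]).
rewrite integral_cst//.
under [X in (_ + X <= _)%E]eq_integral do rewrite EFinM.
rewrite ge0_integralZl_EFin//; last first.
  by apply/measurable_realfun.measurable_EFinP; exact: measurable_realfun.measurable_indic.
rewrite integral_indic// mu_itv'// -EFinM EFinD; apply: leeD => //.
rewrite EFinM; apply: lee_wpmul2l; first by rewrite lee_fin.
rewrite -mu_itv'//.
apply: le_measure; [by rewrite inE; exact: measurableI|by rewrite inE|by apply: subIsetl].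
Qed.

Lemma Rint_step_upper (p q u v al be : R) (f : R -> R) :
  p <= q -> u <= v -> 0 <= al -> 0 <= be ->
  (forall x, `[p, q] x -> 0 <= f x <= al + be * \1_(`[u, v]) x) ->
  Rintegral mu `[p, q] f <= al * (q - p) + be * (v - u).
Proof.
move=> pq uv al0 be0 fb.
have H := le_trans (le_int_nm fb) (int_step pq uv al0 be0).
have H0 : (0 <= \int[mu]_(x in `[p, q]) (f x)%:E)%E.
  by apply: integral_ge0 => x /fb /andP[]; rewrite lee_fin.
rewrite /Rintegral; apply: (fine_le _ _ H) => //.
by rewrite ge0_fin_numE// (le_lt_trans H)// ltry.
Qed.

Lemma Rint_step_lower (p q u v be ga : R) (f : R -> R) :
  p <= u -> u <= v -> v <= q -> 0 <= be -> 0 <= ga ->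
  (forall x, `[p, q] x -> be * \1_(`[u, v]) x <= f x <= ga) ->
  be * (v - u) <= Rintegral mu `[p, q] f.
Proof.
move=> pu uv vq be0 ga0 fb.
have pq : p <= q by rewrite (le_trans pu)// (le_trans uv).
have fb1 : forall x, `[p, q] x -> 0 <= f x <= ga + 0 * \1_(`[u, v]) x.
  move=> x /[dup] xD /fb /andP[h1 h2]; rewrite mul0r addr0 h2 andbT.
  by rewrite (le_trans _ h1)// mulr_ge0.
have H := le_trans (le_int_nm fb1) (int_step pq uv ga0 (lexx 0)).
have fb2 : forall x, `[p, q] x -> 0 <= be * \1_(`[u, v]) x <= f x.
  by move=> x /fb /andP[-> _]; rewrite mulr_ge0.
have H2 := le_int_nm fb2.
have E : (\int[mu]_(x in `[p, q]) (be * \1_(`[u, v]) x)%:E = (be * (v - u))%:E)%E.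
  under eq_integral do rewrite EFinM.
  rewrite ge0_integralZl_EFin//; last first.
    by apply/measurable_realfun.measurable_EFinP; exact: measurable_realfun.measurable_indic.
  rewrite integral_indic// setIidl; last first.
    by apply: subset_itv; rewrite bnd_simp.
  by rewrite mu_itv'// -EFinM.
rewrite E in H2.
have H0 : (0 <= \int[mu]_(x in `[p, q]) (f x)%:E)%E.
  by apply: integral_ge0 => x /fb1 /andP[]; rewrite lee_fin.
rewrite /Rintegral; apply: (fine_le _ _ H2) => //.
by rewrite ge0_fin_numE// (le_lt_trans H)// ltry.
Qed.
End Int.
Section Basic.
Context {R : realType} {n : nat}.

Definition Sq (v : 'rV[R]_n) : R := \sum_(i < n) v ord0 i ^+ 2.

Lemma Sq_ge0 (v : 'rV[R]_n) : 0 <= Sq v.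
Proof. by apply: sumr_ge0 => i _; exact: sqr_ge0. Qed.

Lemma enorm_sqr (v : 'rV[R]_n) : enorm v ^+ 2 = Sq v.
Proof. by rewrite /enorm sqr_sqrtr// Sq_ge0. Qed.

Lemma enorm_ge0 (v : 'rV[R]_n) : 0 <= enorm v.
Proof. exact: sqrtr_ge0. Qed.

Lemma coord_le_Sq (v : 'rV[R]_n) i : v ord0 i ^+ 2 <= Sq v.
Proof.
rewrite /Sq (bigD1 i)//= lerDl; apply: sumr_ge0 => j _; exact: sqr_ge0.
Qed.

Lemma coord_le_enorm (v : 'rV[R]_n) i : `|v ord0 i| <= enorm v.
Proof. by rewrite -sqrtr_sqr /enorm ler_sqrt ?Sq_ge0// coord_le_Sq. Qed.

Lemma Sq_le (v : 'rV[R]_n) C : (forall i, v ord0 i ^+ 2 <= C) -> Sq v <= n%:R * C.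
Proof.
move=> h; rewrite /Sq (le_trans (ler_sum _ (fun i _ => h i)))//.
by rewrite sumr_const card_ord mulr_natl.
Qed.

Lemma Sq_eq0 (v : 'rV[R]_n) : Sq v = 0 -> v = 0.
Proof.
move=> /psumr_eq0P H; apply/matrixP => i j; rewrite (ord1 i) mxE.
by apply/eqP; rewrite -sqrf_eq0; apply/eqP/H => // k _; exact: sqr_ge0.
Qed.

Lemma enorm_gt0 (v : 'rV[R]_n) : v != 0 -> 0 < enorm v.
Proof.
move=> v0; rewrite sqrtr_gt0 lt_def Sq_ge0 andbT; apply/eqP => /Sq_eq0.
by move/eqP: v0.
Qed.

Lemma cont_sum (I : Type) (s : seq I) (F : I -> R -> R) :
  (forall i, continuous (F i)) -> continuous (fun t => \sum_(i <- s) F i t).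
Proof.
move=> cF; elim: s => [|i s IH].
  have -> : (fun t => \sum_(i <- [::]) F i t) = cst 0.
    by apply: funext => t; rewrite big_nil.
  exact: cst_continuous.
have -> : (fun t => \sum_(j <- i :: s) F j t) = (fun t => F i t + \sum_(j <- s) F j t).
  by apply: funext => t; rewrite big_cons.
by move=> x; apply: continuousD; [exact: cF|exact: IH].
Qed.

Lemma co_derivable (f : R -> 'rV[R]_n) i t : derivable f t 1 ->
  derivable (fun x => f x ord0 i) t 1.
Proof. by move=> /derivable_mxP; apply. Qed.

Lemma co_derive (f : R -> 'rV[R]_n) i t : derivable f t 1 ->
  derive1 (fun x => f x ord0 i) t = derive1 f t ord0 i.
Proof. by move=> df; rewrite !derive1E (derive_mx df) mxE. Qed.

Lemma cont_real (h : R -> R) : (forall t, derivable h t 1) -> continuous h.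
Proof. by move=> d t; apply/differentiable_continuous/derivable1_diffP. Qed.

Lemma cont_enorm (f : R -> 'rV[R]_n) : (forall t, derivable f t 1) ->
  continuous (fun t => enorm (f t)).
Proof.
move=> df; rewrite /enorm => t.
apply: (@continuous_comp _ _ _ (fun t => Sq (f t)) (@Num.sqrt R)); last first.
  exact: sqrt_continuous.
rewrite /Sq; apply: cont_sum => i x.
have ci := cont_real (fun t => @co_derivable f i t (df t)).
by apply: continuousM; apply: ci.
Qed.

Lemma lip (h : R -> R) (p q B : R) : (forall x, derivable h x 1) ->
  (forall x, p <= x <= q -> `|derive1 h x| <= B) ->
  forall s t, p <= s <= q -> p <= t <= q -> `|h t - h s| <= B * `|t - s|.
Proof.
move=> dh hB.
have key s t : p <= s -> s <= t -> t <= q -> `|h t - h s| <= B * `|t - s|.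
  move=> ps st tq.
  have [x xst ->] := @MVT_segment R h (derive1 h) s t st
    (fun x _ => eq_ind_r _ (derivableP (dh x)) (derive1E h x))
    (continuous_subspaceT (cont_real dh)).
  rewrite normrM ler_wpM2r//; apply: hB.
  by move: xst; rewrite in_itv/= => /andP[sx xt]; rewrite (le_trans ps sx) (le_trans xt tq).
move=> s t /andP[ps sq] /andP[pt tq].
have [st|ts] := leP s t; first exact: key.
by rewrite distrC [`|t - s|]distrC key// ltW.
Qed.

End Basic.
Lemma sq_le {R : realType} (x y : R) : `|x| <= y -> x ^+ 2 <= y ^+ 2.
Proof.
move=> h; have -> : x ^+ 2 = `|x| ^+ 2 by rewrite -normrX ger0_norm ?sqr_ge0.
have h0 : 0 <= `|x| by [].
nra.
Qed.

Section Main.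
Context {R : realType} {n : nat} (g : R -> 'rV[R]_n) (a b c : R).
Hypothesis ab : a < b.
Hypothesis bc : b < c.
Hypothesis sm : smooth_curve g.
Hypothesis dnz : forall s, a <= s <= c -> derive1 g s != 0.

Local Notation g1 := (derive1 g).
Local Notation g2 := (derive1 (derive1 g)).

Lemma dg t : derivable g t 1. Proof. exact: (@sm 0%N t). Qed.
Lemma dg1 t : derivable g1 t 1. Proof. exact: (@sm 1%N t). Qed.
Lemma dg2 t : derivable g2 t 1. Proof. exact: (@sm 2%N t). Qed.

Lemma N_bounds : exists m K, 0 < m /\ forall t, a <= t <= c ->
  m <= enorm (g1 t) <= K.
Proof.
have ac : a <= c by rewrite ltW// (lt_trans ab bc).
have cN := cont_enorm dg1.
have [t1 t1ac H1] := EVT_max ac (continuous_subspaceT cN).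
have [t0 t0ac H0] := EVT_min ac (continuous_subspaceT cN).
exists (enorm (g1 t0)), (enorm (g1 t1)); split.
  by apply: enorm_gt0; apply: dnz; move: t0ac; rewrite in_itv.
by move=> t tac; rewrite H0 ?H1// in_itv.
Qed.

Lemma N2_bound : exists K2, forall t, a <= t <= c -> enorm (g2 t) <= K2.
Proof.
have ac : a <= c by rewrite ltW// (lt_trans ab bc).
have cN := cont_enorm dg2.
have [t1 t1ac H1] := EVT_max ac (continuous_subspaceT cN).
by exists (enorm (g2 t1)) => t tac; rewrite H1// in_itv.
Qed.

Lemma coord_lip (f : R -> 'rV[R]_n) (K : R) i : (forall t, derivable f t 1) ->
  (forall t, a <= t <= c -> enorm (derive1 f t) <= K) ->
  forall s t, a <= s <= c -> a <= t <= c ->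
  `|f s ord0 i - f t ord0 i| <= K * `|s - t|.
Proof.
move=> df fK s t sac tac.
apply: (@lip R (fun x => f x ord0 i) a c K) => //.
  by move=> x; exact: co_derivable.
move=> x xac; rewrite co_derive//.
exact: le_trans (coord_le_enorm _ _) (fK x xac).
Qed.

Lemma Sq_g_lip K : (forall t, a <= t <= c -> enorm (g1 t) <= K) ->
  forall s t, a <= s <= c -> a <= t <= c ->
  Sq (g s - g t) <= n%:R * (K ^+ 2 * (s - t) ^+ 2).
Proof.
move=> gK s t sac tac; apply: Sq_le => i; rewrite !mxE.
have -> : (s - t) ^+ 2 = `|s - t| ^+ 2 by rewrite -normrX ger0_norm ?sqr_ge0.
rewrite -exprMn; apply: sq_le.
exact: (coord_lip i dg gK sac tac).
Qed.

End Main.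
Section Alg.
Context {R : realType}.
Implicit Types x y K B e P Q m D : R.

Lemma alg_diff_sq x y K B e : `|x - y| <= B * e -> `|x| <= K -> `|y| <= K ->
  `|x ^+ 2 - y ^+ 2| <= 2 * K * B * e.
Proof.
move=> h1 hx hy.
have -> : x ^+ 2 - y ^+ 2 = (x - y) * (x + y) by ring.
have h2 : `|x + y| <= 2 * K.
  by rewrite (le_trans (ler_normD _ _))// mulr2n mulrDl mul1r lerD.
rewrite normrM (le_trans (ler_pM (normr_ge0 _) (normr_ge0 _) h1 h2))//.
by rewrite le_eqVlt; apply/orP; left; apply/eqP; ring.
Qed.

Lemma alg_PQ P Q m D e : 0 < m -> m <= P -> m <= Q ->
  `|P ^+ 2 - Q ^+ 2| <= D * e -> `|P - Q| <= D * e / (2 * m).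
Proof.
move=> m0 mP mQ h.
rewrite ler_pdivlMr ?mulr_gt0//.
rewrite (le_trans _ h)//.
have -> : P ^+ 2 - Q ^+ 2 = (P - Q) * (P + Q) by ring.
have PQ0 : 0 <= P + Q by rewrite addr_ge0// (le_trans (ltW m0)).
rewrite normrM (ger0_norm PQ0).
by rewrite ler_wpM2l// mulr2n mulrDl mul1r lerD.
Qed.

Lemma alg_T x y P Q m K K2 D e : 0 < m -> m <= P -> m <= Q -> 0 <= K -> 0 <= e ->
  `|x - y| <= K2 * e -> `|y| <= K -> `|P - Q| <= D * e / (2 * m) ->
  `|P^-1 * x - Q^-1 * y| <= (K2 / m + K * D / (2 * m ^+ 3)) * e.
Proof.
move=> m0 mP mQ K0 e0 hx hy hPQ.
have P0 : 0 < P := lt_le_trans m0 mP.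
have Q0 : 0 < Q := lt_le_trans m0 mQ.
have -> : P^-1 * x - Q^-1 * y = P^-1 * (x - y) + y * ((Q - P) * (P^-1 * Q^-1)).
  by field; apply/andP; split; rewrite gt_eqF.
rewrite (le_trans (ler_normD _ _))//.
have uP : P^-1 <= m^-1 by rewrite lef_pV2// posrE.
have uQ : Q^-1 <= m^-1 by rewrite lef_pV2// posrE.
have Pi0 : 0 <= P^-1 by rewrite invr_ge0 ltW.
have Qi0 : 0 <= Q^-1 by rewrite invr_ge0 ltW.
have mi0 : 0 <= m^-1 by rewrite invr_ge0 ltW.
have t1 : `|P^-1 * (x - y)| <= m^-1 * (K2 * e).
  rewrite normrM (ger0_norm Pi0).
  by apply: ler_pM.
have t2 : `|y * ((Q - P) * (P^-1 * Q^-1))| <= K * (D * e / (2 * m) * (m^-1 * m^-1)).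
  rewrite !normrM (ger0_norm Pi0) (ger0_norm Qi0).
  apply: ler_pM => //; first by rewrite mulr_ge0// mulr_ge0.
  rewrite distrC; apply: ler_pM => //; first by rewrite mulr_ge0.
  by apply: ler_pM.
rewrite (le_trans (lerD t1 t2))//.
rewrite le_eqVlt; apply/orP; left; apply/eqP.
by field; rewrite gt_eqF.
Qed.
End Alg.
Section Tan.
Context {R : realType} {n : nat} (g : R -> 'rV[R]_n) (a c : R).
Hypothesis sm : smooth_curve g.

Local Notation g1 := (derive1 g).
Local Notation g2 := (derive1 (derive1 g)).

Lemma Sq_T_lip (m K K2 : R) : 0 < m ->
  (forall t, a <= t <= c -> m <= enorm (g1 t) <= K) ->
  (forall t, a <= t <= c -> enorm (g2 t) <= K2) ->
  forall s t, a <= s <= c -> a <= t <= c ->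
  Sq (utangent g s - utangent g t) <=
    n%:R * ((K2 / m + K * (n%:R * (2 * K * K2)) / (2 * m ^+ 3)) ^+ 2 * (s - t) ^+ 2).
Proof.
move=> m0 NmK N2 s t sac tac.
have dg1' : forall t, derivable g1 t 1 := fun t => @dg1 _ _ g sm t.
have /andP[mP PK] := NmK s sac; have /andP[mQ QK] := NmK t tac.
have K0 : 0 <= K := le_trans (ltW m0) (le_trans mP PK).
have e0 : 0 <= `|s - t| by exact: normr_ge0.
have hPQ2 : `|enorm (g1 s) ^+ 2 - enorm (g1 t) ^+ 2| <= n%:R * (2 * K * K2) * `|s - t|.
  rewrite !enorm_sqr /Sq -sumrB (le_trans (ler_norm_sum _ _ _))//.
  have Hj : forall j : 'I_n, `|g1 s ord0 j ^+ 2 - g1 t ord0 j ^+ 2| <= 2 * K * K2 * `|s - t|.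
    move=> j; apply: alg_diff_sq.
    - exact: (coord_lip j dg1' N2 sac tac).
    - exact: le_trans (coord_le_enorm _ _) PK.
    - exact: le_trans (coord_le_enorm _ _) QK.
  apply: (le_trans (ler_sum _ (fun j _ => Hj j))).
  rewrite sumr_const card_ord -mulr_natl le_eqVlt; apply/orP; left; apply/eqP; ring.
have hPQ := alg_PQ m0 mP mQ hPQ2.
apply: Sq_le => i; rewrite !mxE.
have -> : (s - t) ^+ 2 = `|s - t| ^+ 2 by rewrite -normrX ger0_norm ?sqr_ge0.
rewrite -exprMn; apply: sq_le.
apply: alg_T => //.
- exact: (coord_lip i dg1' N2 sac tac).
- exact: le_trans (coord_le_enorm _ _) QK.
Qed.

End Tan.
Lemma ind1 {R : realType} (A : set R) x : A x -> \1_A x = 1 :> R.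
Proof. by move=> Ax; rewrite indicE mem_set. Qed.

Lemma cont_ball {R : realType} (f : R -> R) b e : 0 < e -> continuous f ->
  exists2 d, 0 < d & forall u, `|u - b| < d -> `|f b - f u| < e.
Proof.
move=> e0 cf.
move: (cf b) => /cvgrPdist_lt /(_ e e0) /nbhs_ballP [d d0 Hd].
by exists d => // u ub; apply: Hd; rewrite /ball /= distrC.
Qed.

Section Cross.
Context {R : realType} {n : nat} (g : R -> 'rV[R]_n) (a b c : R).
Hypothesis ab : a < b.
Hypothesis bc : b < c.
Hypothesis sm : smooth_curve g.
Hypothesis dnz : forall s, a <= s <= c -> derive1 g s != 0.
Hypothesis inj : forall s t, a <= s <= c -> a <= t <= c -> g s = g t -> s = t.
Hypothesis A1 : forall s s' t t', a <= s <= b -> a <= s' <= b -> b <= t <= c -> b <= t' <= c ->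
     arclen g s t <= arclen g s' t' ->
     enorm (g s - g t) <= enorm (g s' - g t').

Local Notation g1 := (derive1 g).

Lemma arclen_bounds (m K s t : R) : (forall x, a <= x <= c -> m <= enorm (g1 x) <= K) ->
  0 < m -> a <= s -> s <= t -> t <= c ->
  m * (t - s) <= arclen g s t <= K * (t - s).
Proof.
move=> NmK m0 asx st tc.
have H x : `[s, t] x -> m <= enorm (g1 x) <= K.
  move=> /= ; rewrite in_itv/= => /andP[sx xt]; apply: NmK.
  by rewrite (le_trans asx sx) (le_trans xt tc).
have sst : `[s, t] s by rewrite /= in_itv/= lexx st.
have K0 : 0 <= K.
  have /andP[h1 h2] := H s sst; exact: le_trans (ltW m0) (le_trans h1 h2).
apply/andP; split.
  apply: (@Rint_step_lower R s t s t m K (fun x => enorm (g1 x)) (lexx s) st (lexx t) (ltW m0) K0).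
  by move=> x xst; rewrite ind1// mulr1; exact: H.
have := @Rint_step_upper R s t s t K 0 (fun x => enorm (g1 x)) st st K0 (lexx 0).
rewrite mul0r addr0; apply.
by move=> x xst; rewrite mul0r addr0 enorm_ge0; have /andP[] := H x xst.
Qed.

Lemma cross_lower (m K : R) : (forall x, a <= x <= c -> m <= enorm (g1 x) <= K) ->
  0 < m -> exists2 kap, 0 < kap & forall s t, a <= s <= b -> b <= t <= c ->
    kap ^+ 2 * (t - s) ^+ 2 <= Sq (g s - g t).
Proof.
move=> NmK m0.
have ac : a < c := lt_trans ab bc.
have bac : a <= b <= c by rewrite !ltW.
have K0 : 0 < K.
  have /andP[h1 h2] := NmK b bac; exact: lt_le_trans m0 (le_trans h1 h2).
have [i0 Hi0] : exists i, g1 b ord0 i != 0.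
  apply/not_existsP => Hn; move/negP: (dnz bac); apply.
  apply/eqP/matrixP => i j; rewrite (ord1 i) mxE.
  by have /negP := Hn j; rewrite negbK => /eqP.
pose al := `|g1 b ord0 i0|.
have al0 : 0 < al by rewrite normr_gt0.
have dg' : forall t, derivable g t 1 := fun t => @dg _ _ g sm t.
have dg1' : forall t, derivable g1 t 1 := fun t => @dg1 _ _ g sm t.
have ch1 := cont_real (fun t => @co_derivable _ _ g1 i0 t (dg1' t)).
have [d d0 Hd] := cont_ball b (divr_gt0 al0 (ltr0Sn _ 1)) ch1.
have near s t : s <= b -> b <= t -> b - s < d -> t - b < d ->
    (al / 2) ^+ 2 * (t - s) ^+ 2 <= Sq (g s - g t).
  move=> sb bt bsd tbd.
  have st : s <= t := le_trans sb bt.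
  have hd : forall x : R, is_derive x (1 : R) (fun y => g y ord0 i0) (g1 x ord0 i0).
    move=> x; rewrite -(@co_derive _ _ g i0 x (dg' x)) derive1E.
    exact: derivableP (@co_derivable _ _ g i0 x (dg' x)).
  have [x xst Ex] := @MVT_segment R (fun x => g x ord0 i0) (fun x => g1 x ord0 i0) s t st
    (fun x _ => hd x)
    (continuous_subspaceT (cont_real (fun t => @co_derivable _ _ g i0 t (dg' t)))).
  have hx : `|x - b| < d.
    move: xst; rewrite in_itv/= => /andP[sx xt].
    rewrite ltr_norml; apply/andP; split; lra.
  have gx : al / 2 <= `|g1 x ord0 i0|.
    have h1 := Hd x hx; have h2 := lerB_dist (g1 b ord0 i0) (g1 x ord0 i0).
    rewrite -/al in h2; lra.
  rewrite (le_trans _ (coord_le_Sq _ i0))// !mxE.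
  have -> : g s ord0 i0 - g t ord0 i0 = - (g1 x ord0 i0 * (t - s)) by rewrite -Ex; ring.
  rewrite sqrrN.
  have -> : (g1 x ord0 i0 * (t - s)) ^+ 2 = g1 x ord0 i0 ^+ 2 * (t - s) ^+ 2 by rewrite exprMn.
  have hy : g1 x ord0 i0 ^+ 2 = `|g1 x ord0 i0| ^+ 2 by rewrite -normrX ger0_norm ?sqr_ge0.
  rewrite hy; apply: ler_wpM2r; first exact: sqr_ge0.
  have ha : 0 <= al / 2 by rewrite divr_ge0// ltW.
  by rewrite ler_sqr// ?nnegrE.
pose h0 := Num.min (m * d / K) (c - b).
have h00 : 0 < h0 by rewrite lt_min divr_gt0 ?mulr_gt0// subr_gt0.
have h0c : h0 <= c - b by rewrite ge_min lexx orbT.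
have h0md : h0 <= m * d / K by rewrite ge_min lexx.
have h0m : K * h0 <= m * d by rewrite mulrC -ler_pdivlMr.
pose t0 := b + h0.
have t0ac : a <= t0 <= c by apply/andP; split; rewrite /t0; lra.
have t0bc : b <= t0 <= c by apply/andP; split; rewrite /t0; lra.
pose dd0 := enorm (g b - g t0).
have dd00 : 0 < dd0.
  apply: enorm_gt0; rewrite subr_eq0; apply/eqP => /inj.
  move=> /(_ bac t0ac); rewrite /t0 => E; lra.
have lb0 : arclen g b t0 <= m * d.
  have bt0 : b <= t0 by rewrite /t0; lra.
  have /andP[_ h] := arclen_bounds NmK m0 (ltW ab) bt0 (proj2 (andP t0bc)).
  by rewrite (le_trans h)// /t0 addrC addKr.
have far s t : a <= s <= b -> b <= t <= c -> d <= t - s ->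
    (dd0 / (c - a)) ^+ 2 * (t - s) ^+ 2 <= Sq (g s - g t).
  move=> /andP[asx sb] /andP[bt tc] dts.
  have /andP[h _] := arclen_bounds NmK m0 asx (le_trans sb bt) tc.
  have hA : arclen g b t0 <= arclen g s t.
    by rewrite (le_trans lb0)// (le_trans _ h)// ler_wpM2l// ltW.
  have bab : a <= b <= b by rewrite lexx ltW.
  have sab : a <= s <= b by rewrite asx sb.
  have tbc : b <= t <= c by rewrite bt tc.
  have := A1 bab sab t0bc tbc hA.
  rewrite -/dd0 => hd0.
  rewrite -enorm_sqr -exprMn; apply: sq_le.
  have tsca : t - s <= c - a by lra.
  have ts0 : 0 <= t - s by lra.
  apply: le_trans hd0.
  have ca0 : 0 < c - a by rewrite subr_gt0.
  have q0 : 0 <= dd0 / (c - a) by rewrite divr_ge0// ltW.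
  rewrite ger0_norm; last exact: mulr_ge0.
  rewrite (le_trans (ler_wpM2l q0 tsca))// divfK//; exact: lt0r_neq0.
exists (Num.min (al / 2) (dd0 / (c - a))).
  by rewrite lt_min !divr_gt0// subr_gt0.
move=> s t sab tbc.
have ka0 : 0 <= Num.min (al / 2) (dd0 / (c - a)) by rewrite le_min !divr_ge0 ?ltW ?subr_gt0.
have ts0 : 0 <= (t - s) ^+ 2 by exact: sqr_ge0.
have [hn|hf] := boolP ((b - s < d) && (t - b < d)).
  move/andP: hn => [h1 h2].
  move/andP: sab => [_ sb]; move/andP: tbc => [bt _].
  apply: le_trans (near s t sb bt h1 h2); apply: ler_wpM2r => //.
  by apply: sq_le; rewrite ger0_norm// ge_min lexx.
have dts : d <= t - s.
  move: hf; rewrite negb_and -!leNgt => /orP[] h;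
  move/andP: sab => [_ sb]; move/andP: tbc => [bt _]; lra.
apply: le_trans (far s t sab tbc dts); apply: ler_wpM2r => //.
by apply: sq_le; rewrite ger0_norm// ge_min lexx orbT.
Qed.

End Cross.
Section Kern.
Context {R : realType} {n : nat} (g : R -> 'rV[R]_n) (a b c : R).
Local Notation g1 := (derive1 g).

Definition FF (sx st s t : R) : R :=
  vkernel sx st (g s) (g t) (utangent g s) (utangent g t)
      * enorm (derive1 g s) * enorm (derive1 g t).

Lemma FF_ge0 sx st s t : 0 <= FF sx st s t.
Proof.
by rewrite /FF /vkernel !mulr_ge0 ?expR_ge0 ?enorm_ge0.
Qed.

Lemma expN_le1 (x : R) : 0 <= x -> expR (- x) <= 1.
Proof. by move=> x0; rewrite expR_le1 oppr_le0. Qed.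

Variables (m K : R).
Hypothesis NmK : forall t, a <= t <= c -> m <= enorm (g1 t) <= K.
Hypothesis m0 : 0 < m.

Lemma FF_le sx st s t : a <= s <= c -> a <= t <= c -> FF sx st s t <= K ^+ 2.
Proof.
move=> sac tac.
have /andP[ms sK] := NmK sac; have /andP[mt tK] := NmK tac.
have e1 : 0 <= enorm (g1 s) := le_trans (ltW m0) ms.
have e2 : 0 <= enorm (g1 t) := le_trans (ltW m0) mt.
rewrite /FF /vkernel.
move: (expR_ge0 (- (enorm (g s - g t) ^+ 2 / sx ^+ 2))).
move: (expN_le1 (divr_ge0 (sqr_ge0 (enorm (g s - g t))) (sqr_ge0 sx))).
move: (expR_ge0 (- (enorm (utangent g s - utangent g t) ^+ 2 / st ^+ 2))).
move: (expN_le1 (divr_ge0 (sqr_ge0 (enorm (utangent g s - utangent g t))) (sqr_ge0 st))).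
move: (expR (- (enorm (g s - g t) ^+ 2 / sx ^+ 2))) => E1.
move: (expR (- (enorm (utangent g s - utangent g t) ^+ 2 / st ^+ 2))) => E2.
move: (enorm (g1 s)) (enorm (g1 t)) e1 e2 sK tK => P Q P0 Q0 PK QK h1 h2 h3 h4.
apply: (@le_trans _ _ (1 * K * K)); last by rewrite mul1r expr2.
apply: ler_pM; [by rewrite !mulr_ge0 | exact: Q0 | | exact: QK].
apply: ler_pM; [by rewrite mulr_ge0 | exact: P0 | | exact: PK].
rewrite -[1]mulr1; exact: ler_pM.
Qed.

Variables (lam kap k1 : R).
Hypothesis HG : forall s t, a <= s <= c -> a <= t <= c ->
  Sq (g s - g t) <= n%:R * (K ^+ 2 * (s - t) ^+ 2).
Hypothesis HT : forall s t, a <= s <= c -> a <= t <= c ->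
  Sq (utangent g s - utangent g t) <= n%:R * (lam ^+ 2 * (s - t) ^+ 2).
Hypothesis HC : forall s t, a <= s <= b -> b <= t <= c ->
  kap ^+ 2 * (t - s) ^+ 2 <= Sq (g s - g t).

Lemma FF_lower sx st s t : 0 < sx -> 0 < k1 -> k1 * sx <= st ->
  a <= s <= c -> a <= t <= c -> `|s - t| <= sx ->
  expR (- (n%:R * K ^+ 2)) * expR (- (n%:R * lam ^+ 2 / k1 ^+ 2)) * m ^+ 2
    <= FF sx st s t.
Proof.
move=> sx0 k10 kst sac tac dst.
have st0 : 0 < st := lt_le_trans (mulr_gt0 k10 sx0) kst.
have /andP[ms sK] := NmK sac; have /andP[mt tK] := NmK tac.
have d2 : (s - t) ^+ 2 <= sx ^+ 2 by apply: sq_le.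
have n0 : 0 <= n%:R :> R by [].
have h1 : expR (- (n%:R * K ^+ 2)) <= expR (- (enorm (g s - g t) ^+ 2 / sx ^+ 2)).
  rewrite ler_expR lerN2 enorm_sqr (ler_pdivrMr _ _ (exprn_gt0 2 sx0)).
  apply: le_trans (HG sac tac) _.
  rewrite -[n%:R * K ^+ 2 * sx ^+ 2]mulrA; apply: ler_wpM2l; first exact: n0.
  apply: ler_wpM2l; [exact: sqr_ge0 | exact: d2].
have h2 : expR (- (n%:R * lam ^+ 2 / k1 ^+ 2)) <=
    expR (- (enorm (utangent g s - utangent g t) ^+ 2 / st ^+ 2)).
  rewrite ler_expR lerN2 enorm_sqr (ler_pdivrMr _ _ (exprn_gt0 2 st0)).
  have e1 : n%:R * (lam ^+ 2 * (s - t) ^+ 2) <= n%:R * (lam ^+ 2 * sx ^+ 2).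
    apply: ler_wpM2l; first exact: n0.
    apply: ler_wpM2l; [exact: sqr_ge0 | exact: d2].
  have e2 : n%:R * (lam ^+ 2 * sx ^+ 2) = n%:R * lam ^+ 2 / k1 ^+ 2 * ((k1 * sx) ^+ 2).
    by field; rewrite gt_eqF.
  have e3 : (k1 * sx) ^+ 2 <= st ^+ 2.
    by apply: sq_le; rewrite ger0_norm// mulr_ge0// ltW.
  have e4 : 0 <= n%:R * lam ^+ 2 / k1 ^+ 2.
    by rewrite mulr_ge0 ?invr_ge0 ?sqr_ge0// mulr_ge0// sqr_ge0.
  apply: le_trans (HT sac tac) _; apply: le_trans e1 _; rewrite e2.
  apply: ler_wpM2l; [exact: e4 | exact: e3].
rewrite /FF /vkernel.
move: h1 h2 (expR_ge0 (- (n%:R * K ^+ 2))) (expR_ge0 (- (n%:R * lam ^+ 2 / k1 ^+ 2))).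
move: (expR (- (enorm (g s - g t) ^+ 2 / sx ^+ 2))) => E1.
move: (expR (- (enorm (utangent g s - utangent g t) ^+ 2 / st ^+ 2))) => E2.
move: (expR (- (n%:R * K ^+ 2))) (expR (- (n%:R * lam ^+ 2 / k1 ^+ 2))) => A B.
move: (enorm (g1 s)) (enorm (g1 t)) ms mt => P Q mP mQ h1 h2 A0 B0.
rewrite expr2 mulrA.
have m0' := ltW m0.
apply: ler_pM; [by rewrite !mulr_ge0 | exact: m0' | | exact: mQ].
apply: ler_pM; [by rewrite !mulr_ge0 | exact: m0' | | exact: mP].
exact: ler_pM.
Qed.

Lemma FF_cross sx st s t : 0 < sx -> a <= s <= b -> b <= t <= c ->
  FF sx st s t <= K ^+ 2 * expR (- (kap ^+ 2 * (t - s) ^+ 2 / sx ^+ 2)).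
Proof.
move=> sx0 sab tbc.
have bc' : b <= c by case/andP: tbc => h1 h2; exact: le_trans h1 h2.
have ab' : a <= b by case/andP: sab => h1 h2; exact: le_trans h1 h2.
have sac : a <= s <= c by case/andP: sab => h1 h2; rewrite h1 (le_trans h2 bc').
have tac : a <= t <= c by case/andP: tbc => h1 h2; rewrite h2 (le_trans ab' h1).
have /andP[ms sK] := NmK sac; have /andP[mt tK] := NmK tac.
have h1 : expR (- (enorm (g s - g t) ^+ 2 / sx ^+ 2)) <= expR (- (kap ^+ 2 * (t - s) ^+ 2 / sx ^+ 2)).
  rewrite ler_expR lerN2 enorm_sqr; apply: ler_wpM2r; first by rewrite invr_ge0 sqr_ge0.
  exact: HC.
have h2 := expN_le1 (divr_ge0 (sqr_ge0 (enorm (utangent g s - utangent g t))) (sqr_ge0 st)).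
have h3 := expR_ge0 (- (enorm (utangent g s - utangent g t) ^+ 2 / st ^+ 2)).
have h4 := expR_ge0 (- (enorm (g s - g t) ^+ 2 / sx ^+ 2)).
rewrite /FF /vkernel.
move: h1 h2 h3 h4.
move: (expR (- (enorm (g s - g t) ^+ 2 / sx ^+ 2))) => E1.
move: (expR (- (enorm (utangent g s - utangent g t) ^+ 2 / st ^+ 2))) => E2.
move: (expR (- (kap ^+ 2 * (t - s) ^+ 2 / sx ^+ 2))) => E.
have P0 : 0 <= enorm (g1 s) := le_trans (ltW m0) ms.
have Q0 : 0 <= enorm (g1 t) := le_trans (ltW m0) mt.
move: (enorm (g1 s)) (enorm (g1 t)) P0 Q0 sK tK => P Q P0 Q0 PK QK h1 h2 h3 h4.
apply: (@le_trans _ _ (E * K * K)); last by rewrite le_eqVlt; apply/orP; left; apply/eqP; ring.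
apply: ler_pM; [by rewrite !mulr_ge0 | exact: Q0 | | exact: QK].
apply: ler_pM; [by rewrite !mulr_ge0 | exact: P0 | | exact: PK].
rewrite -[E]mulr1; apply: ler_pM => //.
Qed.

End Kern.
Lemma ind01 {R : realType} (A : set R) y : \1_A y = 0 :> R \/ (\1_A y = 1 :> R /\ A y).
Proof.
rewrite indicE; case: (boolP (y \in A)) => h /=.
  by right; split => //; move: h; rewrite inE.
by left.
Qed.

Section Ints.
Context {R : realType} {n : nat} (g : R -> 'rV[R]_n) (a b c : R).
Hypothesis ab : a < b.
Hypothesis bc : b < c.
Local Notation g1 := (derive1 g).
Local Notation mu := (@lebesgue_measure R).
Variables (m K lam kap k1 : R).
Hypothesis NmK : forall t, a <= t <= c -> m <= enorm (g1 t) <= K.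
Hypothesis m0 : 0 < m.
Hypothesis HG : forall s t, a <= s <= c -> a <= t <= c ->
  Sq (g s - g t) <= n%:R * (K ^+ 2 * (s - t) ^+ 2).
Hypothesis HT : forall s t, a <= s <= c -> a <= t <= c ->
  Sq (utangent g s - utangent g t) <= n%:R * (lam ^+ 2 * (s - t) ^+ 2).
Hypothesis HC : forall s t, a <= s <= b -> b <= t <= c ->
  kap ^+ 2 * (t - s) ^+ 2 <= Sq (g s - g t).

Lemma Kpos : 0 <= K.
Proof.
have bac : a <= b <= c by rewrite !ltW.
have /andP[h1 h2] := NmK bac; exact: le_trans (ltW m0) (le_trans h1 h2).
Qed.

Lemma inab x : `[a, b] x -> a <= x <= c.
Proof. by rewrite /= in_itv/= => /andP[h1 h2]; rewrite h1 (le_trans h2)// ltW. Qed.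

Lemma inbc x : `[b, c] x -> a <= x <= c.
Proof. by rewrite /= in_itv/= => /andP[h1 h2]; rewrite h2 (le_trans _ h1)// ltW. Qed.

Lemma inner_le sx st (p q : R) : a <= p -> p <= q -> q <= c -> forall s, a <= s <= c ->
  0 <= Rintegral mu `[p, q] (FF g sx st s) <= K ^+ 2 * (q - p).
Proof.
move=> ap pq qc s sac; apply/andP; split.
  by apply: Rintegral_ge0 => x _; exact: FF_ge0.
have := @Rint_step_upper R p q p q (K ^+ 2) 0 (FF g sx st s) pq pq (sqr_ge0 K) (lexx 0).
rewrite mul0r addr0; apply => x xpq.
rewrite mul0r addr0; apply/andP; split; first exact: FF_ge0.
apply: (FF_le NmK m0) => //.
by move: xpq; rewrite /= in_itv/= => /andP[h1 h2]; rewrite (le_trans ap h1) (le_trans h2 qc).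
Qed.

Definition Qc := expR (- (n%:R * K ^+ 2)) * expR (- (n%:R * lam ^+ 2 / k1 ^+ 2)) * m ^+ 2.

Lemma Qc_ge0 : 0 <= Qc.
Proof. by apply: mulr_ge0; [apply: mulr_ge0; exact: expR_ge0| exact: sqr_ge0]. Qed.

Lemma norm_lower sx st : 0 < sx -> 2 * sx <= b - a -> 0 < k1 -> k1 * sx <= st ->
  Qc * sx * (b - a) <= varifold_ip sx st g a b a b.
Proof.
move=> sx0 sxba k10 kst.
have ab' := ltW ab.
have K0 := Kpos.
have ac : a <= c by rewrite ltW// (lt_trans ab bc).
have -> : varifold_ip sx st g a b a b =
  Rintegral mu `[a, b] (fun s => Rintegral mu `[a, b] (FF g sx st s)) by [].
apply: (@Rint_step_lower R a b a b (Qc * sx) (K ^+ 2 * (b - a))) => //.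
- by rewrite mulr_ge0// ?Qc_ge0// ltW.
- by rewrite mulr_ge0 ?sqr_ge0// subr_ge0.
move=> s sab.
have sac := inab sab.
have /andP[_ up] := inner_le sx st (lexx a) ab' (ltW bc) sac.
rewrite up andbT ind1// mulr1.
move: sab; rewrite /= in_itv/= => /andP[asx sb].
have key u v : a <= u -> u <= v -> v <= b -> v - u = sx -> `[u, v] s ->
    Qc * sx <= Rintegral mu `[a, b] (FF g sx st s).
  move=> au uv vb vu suv.
  have -> : Qc * sx = Qc * (v - u) by rewrite vu.
  apply: (@Rint_step_lower R a b u v Qc (K ^+ 2)) => //; first exact: Qc_ge0.
    exact: sqr_ge0.
  move=> y yab; rewrite (FF_le NmK m0 _ _ sac (inab yab)) andbT.
  have [->|[-> yuv]] := ind01 `[u, v] y; first by rewrite mulr0 FF_ge0.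
  rewrite mulr1; apply: (FF_lower NmK m0 HG HT sx0 k10 kst sac (inab yab)).
  move: suv yuv; rewrite /= !in_itv/= => /andP[us sv] /andP[uy yv].
  rewrite ler_norml; apply/andP; split; lra.
have [h|h] := leP (s + sx) b.
  apply: (key s (s + sx)); try lra.
  by rewrite /= in_itv/= lexx/=; lra.
apply: (key (s - sx) s); try lra.
by rewrite /= in_itv/= lexx andbT; lra.
Qed.

Lemma cross_upper sx st eta : 0 < sx -> 0 <= eta ->
  varifold_ip sx st g a b b c <=
    K ^+ 2 * expR (- (kap ^+ 2 * eta ^+ 2 / sx ^+ 2)) * (c - b) * (b - a) + K ^+ 2 * eta * eta.
Proof.
move=> sx0 eta0.
have ab' := ltW ab. have bc' := ltW bc.
have K0 := Kpos.
have K20 : 0 <= K ^+ 2 := sqr_ge0 K.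
move: (expR_ge0 (- (kap ^+ 2 * eta ^+ 2 / sx ^+ 2))) => E0.
have -> : varifold_ip sx st g a b b c =
  Rintegral mu `[a, b] (fun s => Rintegral mu `[b, c] (FF g sx st s)) by [].
have bb : b - eta <= b by lra.
apply: le_trans.
  apply: (@Rint_step_upper R a b (b - eta) b
     (K ^+ 2 * expR (- (kap ^+ 2 * eta ^+ 2 / sx ^+ 2)) * (c - b)) (K ^+ 2 * eta)) => //.
  - by rewrite mulr_ge0// ?mulr_ge0// subr_ge0.
  - by rewrite mulr_ge0.
  move=> s sab.
  have sac := inab sab.
  have sab' : a <= s <= b by move: sab; rewrite /= in_itv.
  apply/andP; split; first by apply: Rintegral_ge0 => x _; exact: FF_ge0.
  apply: le_trans.
    apply: (@Rint_step_upper R b c b (b + eta)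
      (K ^+ 2 * expR (- (kap ^+ 2 * eta ^+ 2 / sx ^+ 2))) (K ^+ 2 * \1_(`[b - eta, b]) s)) => //.
    - by rewrite lerDl.
    - by rewrite mulr_ge0.
    - by rewrite mulr_ge0 // indicE.
    move=> t tbc.
    have tbc' : b <= t <= c by move: tbc; rewrite /= in_itv.
    apply/andP; split; first exact: FF_ge0.
    have hc := FF_cross NmK m0 HC st sx0 sab' tbc'.
    apply: (le_trans hc).
    move: sab' tbc' => /andP[asx sb] /andP[bt tc].
    have [h|h] := leP eta (t - s).
      have hE : expR (- (kap ^+ 2 * (t - s) ^+ 2 / sx ^+ 2)) <=
          expR (- (kap ^+ 2 * eta ^+ 2 / sx ^+ 2)).
        rewrite ler_expR lerN2; apply: ler_wpM2r; first by rewrite invr_ge0 sqr_ge0.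
        apply: ler_wpM2l; first exact: sqr_ge0.
        by apply: sq_le; rewrite ger0_norm.
      apply: le_trans (ler_wpM2l K20 hE) _.
      rewrite lerDl; apply: mulr_ge0; last by rewrite indicE.
      by apply: mulr_ge0; last by rewrite indicE.
    rewrite ind1 /=; last by rewrite in_itv/=; apply/andP; split; lra.
    rewrite ind1 /=; last by rewrite in_itv/=; apply/andP; split; lra.
    rewrite !mulr1.
    have e1 : expR (- (kap ^+ 2 * (t - s) ^+ 2 / sx ^+ 2)) <= 1.
      by apply: expN_le1; rewrite divr_ge0 ?sqr_ge0// mulr_ge0 ?sqr_ge0.
    apply: le_trans (ler_wpM2l K20 e1) _.
    rewrite mulr1 lerDr; exact: mulr_ge0.
  rewrite le_eqVlt; apply/orP; left; apply/eqP; ring.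
rewrite le_eqVlt; apply/orP; left; apply/eqP; ring.
Qed.

End Ints.
Lemma expR_small {R : realType} (B x : R) : 0 < B -> 0 < x ->
  expR (- (B / x)) <= 2 * x ^+ 2 / B ^+ 2.
Proof.
move=> B0 x0.
have y0 : 0 < B / x by rewrite divr_gt0.
have h := expR_ge1Dxn 1 (ltW y0).
have h2 : (B / x) ^+ 2 / 2 <= expR (B / x).
  by apply: le_trans h; rewrite lerDr.
have p0 : 0 < (B / x) ^+ 2 / 2 by rewrite divr_gt0// exprn_gt0.
rewrite expRN; apply: (@le_trans _ _ (((B / x) ^+ 2 / 2)^-1)).
  by rewrite lef_pV2 ?posrE ?expR_gt0.
rewrite le_eqVlt; apply/orP; left; apply/eqP.
by field; rewrite !gt_eqF.
Qed.

End Helpers.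
Import Helpers.

Theorem lemma1 (R : realType) (n : nat) (g : R -> 'rV[R]_n) (a b c : R)
    (xi xj xk : 'rV[R]_n) :
  a < b -> b < c ->
  smooth_curve g ->
  (forall s, a <= s <= c -> derive1 g s != 0) ->
  (forall s t, a <= s <= c -> a <= t <= c -> g s = g t -> s = t) ->
  g a = xi -> g b = xj -> g c = xk ->
  (* Assumption A1 *)
  (forall s s' t t', a <= s <= b -> a <= s' <= b -> b <= t <= c -> b <= t' <= c ->
     arclen g s t <= arclen g s' t' ->
     enorm (g s - g t) <= enorm (g s' - g t')) ->
  forall k1 k2 : R, 0 < k1 -> 0 < k2 ->
  forall eps : R, 0 < eps ->
  exists delta : R, 0 < delta /\
    forall sx st : R, 0 < sx -> sx < delta -> 0 < st -> st < delta ->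
      k1 * sx <= st <= k2 * sx ->
      `| varifold_ip sx st g a b b c |
        <= eps * (varifold_ip sx st g a b a b + varifold_ip sx st g b c b c).
Proof.
move=> ab bc sm dnz inj _ _ _ A1 k1 k2 k10 k20 eps eps0.
have [m [K [m0 NmK]]] := N_bounds ab bc sm dnz.
have [K2 N2] := N2_bound ab bc sm.
have NK : forall t, a <= t <= c -> enorm (derive1 g t) <= K.
  by move=> t /NmK /andP[].
have HG : forall s t, a <= s <= c -> a <= t <= c ->
    Sq (g s - g t) <= n%:R * (K ^+ 2 * (s - t) ^+ 2).
  move=> s t; exact: (@Sq_g_lip R n g a c sm K NK s t).
pose lam := K2 / m + K * (n%:R * (2 * K * K2)) / (2 * m ^+ 3).
have HT : forall s t, a <= s <= c -> a <= t <= c ->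
    Sq (utangent g s - utangent g t) <= n%:R * (lam ^+ 2 * (s - t) ^+ 2).
  move=> s t; exact: (@Sq_T_lip R n g a c sm m K K2 m0 NmK N2 s t).
have [kap kap0 HC] := cross_lower ab bc sm dnz inj A1 NmK m0.
have K0 : 0 < K.
  have bac : a <= b <= c by rewrite !ltW.
  have /andP[h1 h2] := NmK b bac; exact: lt_le_trans m0 (le_trans h1 h2).
have ba0 : 0 < b - a by rewrite subr_gt0.
have cb0 : 0 < c - b by rewrite subr_gt0.
have Q0 : 0 < @Qc R n m K lam k1.
  rewrite /Qc; apply: mulr_gt0; last exact: exprn_gt0.
  by apply: mulr_gt0; exact: expR_gt0.
move: (@Qc R n m K lam k1) Q0 (@norm_lower R n g a b c ab bc m K lam k1 NmK m0 HG HT) => Q Q0 NL.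
have Cn0 : 0 < Q * (b - a) := mulr_gt0 Q0 ba0.
have K20 : 0 < K ^+ 2 := exprn_gt0 2 K0.
pose A := eps * (Q * (b - a)) / (2 * K ^+ 2).
have A0 : 0 < A by rewrite /A divr_gt0// ?mulr_gt0.
pose B := kap ^+ 2 * A.
have B0 : 0 < B by rewrite /B mulr_gt0// exprn_gt0.
pose Cc := eps * (Q * (b - a)) / (2 * K ^+ 2 * (c - b) * (b - a)).
have Cc0 : 0 < Cc by rewrite /Cc divr_gt0// ?mulr_gt0.
exists (Num.min ((b - a) / 2) (Cc * B ^+ 2 / 2)); split.
  rewrite lt_min; apply/andP; split; first by apply: divr_gt0.
  by apply: divr_gt0 => //; apply: mulr_gt0 => //; exact: exprn_gt0.
move=> sx st sx0 sxd st0 _ /andP[kst _].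
have sxba : 2 * sx <= b - a.
  have : sx <= (b - a) / 2 by apply: ltW; apply: lt_le_trans sxd _; rewrite ge_min lexx.
  lra.
have sxC : sx <= Cc * B ^+ 2 / 2.
  by apply: ltW; apply: lt_le_trans sxd _; rewrite ge_min lexx orbT.
pose eta := Num.sqrt (A * sx).
have eta0 : 0 <= eta := sqrtr_ge0 _.
have eta2 : eta * eta = A * sx by rewrite -expr2 sqr_sqrtr// mulr_ge0// ltW.
have NL' := NL sx st sx0 sxba k10 kst.
have CU := @cross_upper R n g a b c ab bc m K kap NmK m0 HC sx st eta sx0 eta0.
have V2 : 0 <= varifold_ip sx st g b c b c.
  apply: Rintegral_ge0 => s _; apply: Rintegral_ge0 => t _.
  exact: (FF_ge0 g sx st s t).
have V1 : 0 <= varifold_ip sx st g a b b c.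
  apply: Rintegral_ge0 => s _; apply: Rintegral_ge0 => t _.
  exact: (FF_ge0 g sx st s t).
rewrite ger0_norm//; apply: le_trans CU _.
have hB : kap ^+ 2 * eta ^+ 2 / sx ^+ 2 = B / sx.
  by rewrite [eta ^+ 2]expr2 eta2 /B; field; rewrite gt_eqF.
rewrite hB.
have HE := expR_small B0 sx0.
have HE2 : 2 * sx ^+ 2 / B ^+ 2 <= Cc * sx.
  rewrite ler_pdivrMr ?exprn_gt0//.
  have : 0 <= sx * (Cc * B ^+ 2 / 2 - sx) by rewrite mulr_ge0// ?subr_ge0// ltW.
  move=> h; rewrite le_eqVlt in h.
  have e : Cc * sx * B ^+ 2 - 2 * sx ^+ 2 = 2 * (sx * (Cc * B ^+ 2 / 2 - sx)) by field.
  rewrite -subr_ge0 e mulr_ge0//.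
  by case/orP: h => [/eqP <-|/ltW].
move: (expR (- (B / sx))) HE => E HE.
have HE3 := le_trans HE HE2.
have t1 : K ^+ 2 * E * (c - b) * (b - a) <= eps * (Q * (b - a)) * sx / 2.
  apply: (@le_trans _ _ (K ^+ 2 * (Cc * sx) * (c - b) * (b - a))).
    apply: ler_wpM2r; first exact: ltW.
    apply: ler_wpM2r; first exact: ltW.
    by apply: ler_wpM2l; first exact: ltW.
  rewrite le_eqVlt; apply/orP; left; apply/eqP; rewrite /Cc.
  by field; rewrite !gt_eqF.
have t2 : K ^+ 2 * eta * eta = eps * (Q * (b - a)) * sx / 2.
  by rewrite -mulrA eta2 /A; field; rewrite gt_eqF.
have t3 : eps * (Q * (b - a)) * sx <= eps * (varifold_ip sx st g a b a b + varifold_ip sx st g b c b c).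
  rewrite -mulrA; apply: ler_wpM2l; first exact: ltW.
  have -> : Q * (b - a) * sx = Q * sx * (b - a) by ring.
  apply: le_trans NL' _; rewrite lerDl; exact: V2.
move: t1 t2 t3; move: (varifold_ip sx st g a b a b + varifold_ip sx st g b c b c) => V.
move=> t1 t2 t3; rewrite t2; lra.
Qed.
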